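(* Let $\mathcal{B}\in\mathbb{R}^{l\times m\times n}$ and integers $r_1<k_1<l$, $r_2<k_2<m$, $r_3<k_3<n$, and let $\mathcal{C}\in\mathbb{R}^{k_1\times k_2\times k_3}$ be the leading subtensor $\mathcal{C}=\mathcal{B}(1{:}k_1,1{:}k_2,1{:}k_3)$. Define $f(X,Y,Z)=\|\mathcal{B}\cdot(X,Y,Z)\|^2$ on $\mathrm{Gr}^3=(\mathrm{Gr}(l,r_1),\mathrm{Gr}(m,r_2),\mathrm{Gr}(n,r_3))$ and $g(U,V,W)=\|\mathcal{C}\cdot(U,V,W)\|^2$ on $\mathrm{Gr}^3_k=(\mathrm{Gr}(k_1,r_1),\mathrm{Gr}(k_2,r_2),\mathrm{Gr}(k_3,r_3))$. Let $E_0=\left(\begin{pmatrix}I_{r_1}\\0\end{pmatrix},\begin{pmatrix}I_{r_2}\\0\end{pmatrix},\begin{pmatrix}I_{r_3}\\0\end{pmatrix}\right)\in\mathrm{Gr}^3$ and let $E_{0k}$ be the point of $\mathrm{Gr}^3_k$ given by the same block formulas (with zero blocks of the appropriate smaller sizes). If the Grassmann Hessian of $f$ is positive definite on the tangent space of $\mathrm{Gr}^3$ at $E_0$, then the Grassmann Hessian of $g$ is positive definite on the tangent space of $\mathrm{Gr}^3_k$ at $E_{0k}$.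
   Context: For a tensor $\mathcal{B}$ and matrices $X,Y,Z$ with compatible row dimensions, $\mathcal{B}\cdot(X,Y,Z)$ is the tensor with entries $\sum_{\alpha,\beta,\gamma}x_{\alpha i}y_{\beta j}z_{\gamma k}b_{\alpha\beta\gamma}$; norms are Frobenius norms. $\mathrm{Gr}(l,r)$ denotes the Grassmann manifold of $r$-dimensional subspaces of $\mathbb{R}^l$, a point being represented by a matrix $X\in\mathbb{R}^{l\times r}$ with orthonormal columns (the equivalence class $\{XQ: Q\in\mathbb{R}^{r\times r}\text{ orthogonal}\}$); the functions $f,g$ are well defined on these products since they are invariant under such right multiplications. The Grassmann Hessian is the Riemannian Hessian on the product manifold. *)

(* Defs.v *)
From HB Require Import structures.
From mathcomp Require Import all_boot all_order all_algebra.
From mathcomp Require Import reals topology normedtype derive.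
Set Implicit Arguments. Unset Strict Implicit. Unset Printing Implicit Defensive.
Import Order.TTheory GRing.Theory Num.Theory numFieldNormedType.Exports.
Local Open Scope ring_scope.

Definition tensor3 (R : Type) (l m n : nat) := 'I_l -> 'I_m -> 'I_n -> R.

Definition mlprod (R : realType) (l m n p q s : nat) (B : tensor3 R l m n)
  (X : 'M[R]_(l, p)) (Y : 'M[R]_(m, q)) (Z : 'M[R]_(n, s)) : tensor3 R p q s :=
  fun i j k => \sum_(a < l) \sum_(b < m) \sum_(c < n) X a i * Y b j * Z c k * B a b c.

Definition tnorm2 (R : realType) (p q s : nat) (T : tensor3 R p q s) : R :=
  \sum_(i < p) \sum_(j < q) \sum_(k < s) T i j k ^+ 2.

Definition objf (R : realType) (l m n p q s : nat) (B : tensor3 R l m n)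
  (X : 'M[R]_(l, p)) (Y : 'M[R]_(m, q)) (Z : 'M[R]_(n, s)) : R :=
  tnorm2 (mlprod B X Y Z).

Definition lead_sub (R : Type) (l m n k1 k2 k3 : nat)
  (h1 : (k1 <= l)%N) (h2 : (k2 <= m)%N) (h3 : (k3 <= n)%N)
  (B : tensor3 R l m n) : tensor3 R k1 k2 k3 :=
  fun a b c => B (widen_ord h1 a) (widen_ord h2 b) (widen_ord h3 c).

Definition E0 (R : realType) (l r : nat) : 'M[R]_(l, r) :=
  \matrix_(i < l, j < r) ((i : nat) == j)%:R.

(* Horizontal (tangent) space of Gr(l,r) at X (orthonormal columns):
   Delta with X^T Delta = 0. *)
Definition grass_tangent (R : realType) (l r : nat) (X D : 'M[R]_(l, r)) : Prop :=
  X^T *m D = 0.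

(* Grassmann (Riemannian) Hessian quadratic form on the product
   Gr(l,p) x Gr(m,q) x Gr(n,s) of a function F (Euclidean extension, invariant
   under right orthogonal multiplication), at (X,Y,Z) in direction
   (DX,DY,DZ) of the tangent space (Edelman-Arias-Smith formula):
     Hess F [D,D] = F_YY(D,D) - <grad F, (X DX^T DX, Y DY^T DY, Z DZ^T DZ)>,
   where F_YY(D,D) = d^2/dt^2 F(X+tDX, Y+tDY, Z+tDZ) at t=0 and
   the second term is the directional derivative of F at (X,Y,Z) in the
   direction (X DX^T DX, Y DY^T DY, Z DZ^T DZ). *)
Definition grass_hess3 (R : realType) (l m n p q s : nat)
  (F : 'M[R]_(l, p) -> 'M[R]_(m, q) -> 'M[R]_(n, s) -> R)
  (X : 'M[R]_(l, p)) (Y : 'M[R]_(m, q)) (Z : 'M[R]_(n, s))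
  (DX : 'M[R]_(l, p)) (DY : 'M[R]_(m, q)) (DZ : 'M[R]_(n, s)) : R :=
  derive1 (derive1 (fun t : R => F (X + t *: DX) (Y + t *: DY) (Z + t *: DZ))) 0
  - derive1 (fun t : R => F (X + t *: (X *m (DX^T *m DX)))
                             (Y + t *: (Y *m (DY^T *m DY)))
                             (Z + t *: (Z *m (DZ^T *m DZ)))) 0.

Definition grass_hess3_posdef (R : realType) (l m n p q s : nat)
  (F : 'M[R]_(l, p) -> 'M[R]_(m, q) -> 'M[R]_(n, s) -> R)
  (X : 'M[R]_(l, p)) (Y : 'M[R]_(m, q)) (Z : 'M[R]_(n, s)) : Prop :=
  forall (DX : 'M[R]_(l, p)) (DY : 'M[R]_(m, q)) (DZ : 'M[R]_(n, s)),
    grass_tangent X DX -> grass_tangent Y DY -> grass_tangent Z DZ ->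
    ~ (DX = 0 /\ DY = 0 /\ DZ = 0) ->
    0 < grass_hess3 F X Y Z DX DY DZ.

(* Main.v *)
Require Import Defs.
From HB Require Import structures.
From mathcomp Require Import all_boot all_order all_algebra.
From mathcomp Require Import boolp reals topology normedtype derive.
Set Implicit Arguments. Unset Strict Implicit. Unset Printing Implicit Defensive.
Import Order.TTheory GRing.Theory Num.Theory.
Local Open Scope ring_scope.

Section Pad.
Variable R : realType.

Definition Smx (k l : nat) (h : (k <= l)%N) : 'M[R]_(l, k) :=
  \matrix_(a < l, b < k) ((widen_ord h b == a)%:R).

Lemma sum_sel (k l : nat) (h : (k <= l)%N) (b : 'I_k) (G : 'I_l -> R) :
  \sum_(a < l) (widen_ord h b == a)%:R * G a = G (widen_ord h b).
Proof.
rewrite (bigD1 (widen_ord h b)) //= eqxx mul1r big1 ?addr0 // => a.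
by rewrite eq_sym => /negbTE ->; rewrite mul0r.
Qed.

Lemma padsum (k l p : nat) (h : (k <= l)%N) (U : 'M[R]_(k, p)) (i : 'I_p)
  (F : 'I_l -> R) :
  \sum_(a < l) (Smx h *m U) a i * F a = \sum_(b < k) U b i * F (widen_ord h b).
Proof.
under eq_bigr do rewrite mxE mulr_suml.
rewrite exchange_big /=; apply: eq_bigr => b _.
under eq_bigr do rewrite mxE -mulrA.
by rewrite sum_sel.
Qed.

Lemma StS (k l : nat) (h : (k <= l)%N) : (Smx h)^T *m Smx h = 1%:M.
Proof.
apply/matrixP => b b'; rewrite !mxE.
under eq_bigr do rewrite !mxE.
rewrite sum_sel; congr (_%:R).
case: (b =P b') => [->|ne]; first by rewrite eqxx.
case: eqP => // E; exfalso; apply: ne; apply/val_inj; exact: (esym (congr1 val E)).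
Qed.

Lemma S_E0 (k l r : nat) (h : (k <= l)%N) (hr : (r < k)%N) :
  Smx h *m E0 R k r = E0 R l r.
Proof.
apply/matrixP => a j; rewrite !mxE.
rewrite (bigD1 (widen_ord (ltnW hr) j)) //= !mxE /= eqxx mulr1.
rewrite big1 ?addr0; first by rewrite -val_eqE /= eq_sym.
move=> b hb; rewrite !mxE.
have /negbTE -> : (b : nat) != j; last by rewrite mulr0.
apply/eqP => E; move: hb; apply/negP; rewrite negbK; apply/eqP/val_inj; exact: E.
Qed.

Lemma objf_pad (l m n k1 k2 k3 p q s : nat) (h1 : (k1 <= l)%N)
  (h2 : (k2 <= m)%N) (h3 : (k3 <= n)%N) (B : tensor3 R l m n)
  (U : 'M[R]_(k1, p)) (V : 'M[R]_(k2, q)) (W : 'M[R]_(k3, s)) :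
  objf B (Smx h1 *m U) (Smx h2 *m V) (Smx h3 *m W) =
  objf (lead_sub h1 h2 h3 B) U V W.
Proof.
rewrite /objf; congr tnorm2.
apply: funext => i; apply: funext => j; apply: funext => c.
rewrite /mlprod /lead_sub.
transitivity (\sum_(a < l) (Smx h1 *m U) a i * \sum_(b < m) (Smx h2 *m V) b j *
   \sum_(e < n) (Smx h3 *m W) e c * B a b e).
  apply: eq_bigr => a _; rewrite big_distrr; apply: eq_bigr => b _.
  rewrite big_distrr big_distrr; apply: eq_bigr => e _ /=.
  by rewrite !mulrA.
rewrite padsum; apply: eq_bigr => a _.
rewrite padsum big_distrr; apply: eq_bigr => b _ /=.
rewrite padsum big_distrr big_distrr; apply: eq_bigr => e _ /=.
by rewrite !mulrA.
Qed.

End Pad.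

Theorem propositionA1 (R : realType) (l m n r1 r2 r3 k1 k2 k3 : nat)
  (B : tensor3 R l m n)
  (hr1 : (r1 < k1)%N) (hk1 : (k1 < l)%N)
  (hr2 : (r2 < k2)%N) (hk2 : (k2 < m)%N)
  (hr3 : (r3 < k3)%N) (hk3 : (k3 < n)%N) :
  grass_hess3_posdef (@objf R l m n r1 r2 r3 B)
    (E0 R l r1) (E0 R m r2) (E0 R n r3) ->
  grass_hess3_posdef
    (@objf R k1 k2 k3 r1 r2 r3 (lead_sub (ltnW hk1) (ltnW hk2) (ltnW hk3) B))
    (E0 R k1 r1) (E0 R k2 r2) (E0 R k3 r3).
Proof.
move=> H DU DV DW tU tV tW nz.
set S1 := Smx R (ltnW hk1); set S2 := Smx R (ltnW hk2); set S3 := Smx R (ltnW hk3).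
have tg : forall (k0 l0 r0 : nat) (h : (k0 <= l0)%N) (hr : (r0 < k0)%N) (D : 'M[R]_(k0, r0)),
    grass_tangent (E0 R k0 r0) D -> grass_tangent (E0 R l0 r0) (Smx R h *m D).
  move=> k0 l0 r0 h hr D; rewrite /grass_tangent -(S_E0 R h hr) trmx_mul.
  by rewrite mulmxA -(mulmxA _ _ (Smx R h)) StS mulmx1.
have nzS : forall (k0 l0 r0 : nat) (h : (k0 <= l0)%N) (D : 'M[R]_(k0, r0)),
    Smx R h *m D = 0 -> D = 0.
  move=> k0 l0 r0 h D HD.
  by rewrite -(mul1mx D) -(StS R h) -mulmxA HD mulmx0.
have := H (S1 *m DU) (S2 *m DV) (S3 *m DW) (tg _ _ _ _ hr1 _ tU)
  (tg _ _ _ _ hr2 _ tV) (tg _ _ _ _ hr3 _ tW).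
have -> : grass_hess3 (objf B) (E0 R l r1) (E0 R m r2) (E0 R n r3)
   (S1 *m DU) (S2 *m DV) (S3 *m DW) =
   grass_hess3 (objf (lead_sub (ltnW hk1) (ltnW hk2) (ltnW hk3) B))
   (E0 R k1 r1) (E0 R k2 r2) (E0 R k3 r3) DU DV DW.
  rewrite /grass_hess3 -(S_E0 R (ltnW hk1) hr1) -(S_E0 R (ltnW hk2) hr2)
    -(S_E0 R (ltnW hk3) hr3).
  rewrite /S1 /S2 /S3.
  have sq : forall (k0 l0 r0 : nat) (h : (k0 <= l0)%N) (D : 'M[R]_(k0, r0)),
      (Smx R h *m D)^T *m (Smx R h *m D) = D^T *m D.
    move=> k0 l0 r0 h D; rewrite trmx_mul mulmxA -(mulmxA _ _ (Smx R h)) StS.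
    by rewrite mulmx1.
  rewrite !sq.
  have lin : forall (k0 l0 r0 : nat) (h : (k0 <= l0)%N) (A D : 'M[R]_(k0, r0)) (t : R),
      Smx R h *m A + t *: (Smx R h *m D) = Smx R h *m (A + t *: D).
    by move=> *; rewrite mulmxDr scalemxAr.
  have e1 : (fun t : R =>
     objf B (Smx R (ltnW hk1) *m E0 R k1 r1 + t *: (Smx R (ltnW hk1) *m DU))
       (Smx R (ltnW hk2) *m E0 R k2 r2 + t *: (Smx R (ltnW hk2) *m DV))
       (Smx R (ltnW hk3) *m E0 R k3 r3 + t *: (Smx R (ltnW hk3) *m DW))) =
     (fun t : R => objf (lead_sub (ltnW hk1) (ltnW hk2) (ltnW hk3) B)
       (E0 R k1 r1 + t *: DU) (E0 R k2 r2 + t *: DV) (E0 R k3 r3 + t *: DW)).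
    by apply: funext => t; rewrite !lin objf_pad.
  have e2 : (fun t : R =>
     objf B (Smx R (ltnW hk1) *m E0 R k1 r1 + t *: (Smx R (ltnW hk1) *m E0 R k1 r1 *m (DU^T *m DU)))
       (Smx R (ltnW hk2) *m E0 R k2 r2 + t *: (Smx R (ltnW hk2) *m E0 R k2 r2 *m (DV^T *m DV)))
       (Smx R (ltnW hk3) *m E0 R k3 r3 + t *: (Smx R (ltnW hk3) *m E0 R k3 r3 *m (DW^T *m DW)))) =
     (fun t : R => objf (lead_sub (ltnW hk1) (ltnW hk2) (ltnW hk3) B)
       (E0 R k1 r1 + t *: (E0 R k1 r1 *m (DU^T *m DU)))
       (E0 R k2 r2 + t *: (E0 R k2 r2 *m (DV^T *m DV)))
       (E0 R k3 r3 + t *: (E0 R k3 r3 *m (DW^T *m DW)))).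
    by apply: funext => t; rewrite -!mulmxA !lin objf_pad.
  by rewrite e1 e2.
apply => -[/nzS D1 [/nzS D2 /nzS D3]]; exact: nz.
Qed.
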